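(* As $\ell\to0$, $\frac{F(\omega_1(\ell))+F(\omega_{-1}(\ell))}{2}=F(\kappa)$, $\frac{F(\omega_1(\ell))-F(\omega_{-1}(\ell))}{2}=\Big(F'(\kappa)+(\kappa F''(\kappa)-F'(\kappa))\frac{\ell^2}{2\kappa^2}\Big)\xi_+(\ell)+\frac16F'''(\kappa)\,\xi_+(\ell)^3+O(\ell^5)$, and $\xi_+(\ell)=\ell\sqrt{-\frac{F'(\kappa)}{\kappa F''(\kappa)}}\Big(1+\frac{\ell^2}{2\kappa^2}\Big(\frac34-\frac{F'(\kappa)}{\kappa F''(\kappa)}+\frac\kappa4\Big(\frac{F''(\kappa)}{F'(\kappa)}-2\frac{F'''(\kappa)}{F''(\kappa)}\Big)+\frac{\kappa}{12}\frac{F''''(\kappa)F'(\kappa)}{F''(\kappa)^2}\Big)\Big)+O(\ell^5)$.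
   Context: Fix $\kappa>0$ and set $\mu_0:=\kappa/\tanh(\kappa)$. Let $F:\mathbb R\to\mathbb R$ be the odd analytic function with $F(r)=\sqrt{r\tanh r}$ for $r\ge0$ (one has $F'>0$ and $F''(\kappa)<0$). For $n\in\mathbb Z$, $(\ell,\xi)\in\mathbb R^2$ set $|n\kappa|_{\ell,\xi}:=\sqrt{(n\kappa+\xi)^2+\ell^2}$ and $\lambda^\pm_{n,\ell,\xi}:=i(n\kappa+\xi\pm\sqrt{\mu_0}F(|n\kappa|_{\ell,\xi}))$. Let $\xi_+$ be the odd analytic function defined near $0$ with $\xi_+'(0)>0$ such that $\lambda^-_{1,\ell,\xi_+(\ell)}=\lambda^+_{-1,\ell,\xi_+(\ell)}$ for all small $\ell$, and set $\omega_j(\ell):=\sqrt{(j\kappa+\xi_+(\ell))^2+\ell^2}$ for $j\in\mathbb Z$. *)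

(* Defs.v *)
From Stdlib Require Import Reals.
From Coquelicot Require Import Coquelicot.
Open Scope R_scope.

(* F : the odd function with F r = sqrt (r tanh r) for r >= 0.
   Since r * tanh r is even and >= 0, for r < 0 we set F r = - sqrt (r tanh r). *)
Definition F (r : R) : R :=
  if Rle_dec 0 r then sqrt (r * tanh r) else - sqrt (r * tanh r).

Definition mu0 (kappa : R) : R := kappa / tanh kappa.

Definition absnk (kappa : R) (n : Z) (l xi : R) : R :=
  sqrt ((IZR n * kappa + xi) ^ 2 + l ^ 2).

Definition lam_plus (kappa : R) (n : Z) (l xi : R) : C :=
  Cmult Ci (RtoC (IZR n * kappa + xi + sqrt (mu0 kappa) * F (absnk kappa n l xi))).
Definition lam_minus (kappa : R) (n : Z) (l xi : R) : C :=
  Cmult Ci (RtoC (IZR n * kappa + xi - sqrt (mu0 kappa) * F (absnk kappa n l xi))).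

Definition is_xi_plus (kappa : R) (xi : R -> R) : Prop :=
  (exists (a : nat -> R) (r : R), 0 < r /\
     forall l, Rabs l < r ->
       xi (- l) = - xi l /\
       is_pseries a l (xi l) /\
       lam_minus kappa 1 l (xi l) = lam_plus kappa (-1) l (xi l))
  /\ (exists d, is_derive xi 0 d /\ 0 < d).

Definition omega (kappa : R) (xi : R -> R) (j : Z) (l : R) : R :=
  absnk kappa j l (xi l).

Definition dF (k : nat) (x : R) : R := Derive_n F k x.

(* Main.v *)
Require Import Defs.
From Stdlib Require Import Reals Lra Lia List.
From Coquelicot Require Import Coquelicot.
Import ListNotations.
Open Scope R_scope.

Fixpoint evalM (vs : list R) (es : list nat) : R :=
  match vs, es with
  | v::vs', e::es' => v ^ e * evalM vs' es'
  | _, _ => 1 end.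
Fixpoint bndM (bs : list R) (es : list nat) : R :=
  match bs, es with
  | b::bs', e::es' => b ^ e * bndM bs' es'
  | _, _ => 1 end.
Fixpoint wM (ws : list nat) (es : list nat) : nat :=
  match ws, es with
  | w::ws', e::es' => (w*e + wM ws' es')%nat
  | _, _ => 0%nat end.
Fixpoint evalP (vs : list R) (p : list (R * list nat)) : R :=
  match p with nil => 0 | (c,es)::p' => c * evalM vs es + evalP vs p' end.
Fixpoint bndP (bs : list R) (p : list (R * list nat)) : R :=
  match p with nil => 0 | (c,es)::p' => Rabs c * bndM bs es + bndP bs p' end.
Definition wokb (ws : list nat) (w : nat) (p : list (list nat)) : bool :=
  forallb (fun es => Nat.leb w (wM ws es)) p.

Inductive envok (l : R) : list R -> list R -> list nat -> Prop :=
| envok_nil : envok l nil nil nil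
| envok_cons v b w vs bs ws : 0 <= b -> Rabs v <= b * Rabs l ^ w ->
    envok l vs bs ws -> envok l (v::vs) (b::bs) (w::ws).

Lemma bndM_ge0 bs es l vs ws : envok l vs bs ws -> 0 <= bndM bs es.
Proof.
  intros H; revert es; induction H; intros es; destruct es; simpl; try lra.
  apply Rmult_le_pos; [apply pow_le; lra | apply IHenvok].
Qed.

Lemma evalM_bnd l vs bs ws es : envok l vs bs ws ->
  Rabs (evalM vs es) <= bndM bs es * Rabs l ^ (wM ws es).
Proof.
  intros H; revert es; induction H; intros es; destruct es as [|e es]; simpl;
   try (rewrite Rabs_R1; lra).
  rewrite Rabs_mult, pow_add.
  replace (b ^ e * bndM bs es * (Rabs l ^ (w * e) * Rabs l ^ wM ws es))
    with ((b * Rabs l ^ w) ^ e * (bndM bs es * Rabs l ^ wM ws es))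
    by (rewrite Rpow_mult_distr, <- pow_mult; ring).
  apply Rmult_le_compat; try apply Rabs_pos; auto.
  rewrite <- RPow_abs. apply pow_incr; split; auto; apply Rabs_pos.
Qed.



Lemma pow_le_w (a : R) (n m : nat) : 0 <= a <= 1 -> (m <= n)%nat -> a ^ n <= a ^ m.
Proof.
  intros Ha Hmn. replace n with (m + (n - m))%nat by lia.
  rewrite pow_add. rewrite <- (Rmult_1_r (a ^ m)) at 2.
  apply Rmult_le_compat_l. apply pow_le; lra.
  induction (n - m)%nat; simpl; try lra.
  replace 1 with (1*1) by ring. apply Rmult_le_compat; try lra. apply pow_le; lra.
Qed.

Lemma tool l vs bs ws w p : envok l vs bs ws -> Rabs l <= 1 ->
  wokb ws w (map snd p) = true ->
  Rabs (evalP vs p) <= bndP bs p * Rabs l ^ w.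
Proof.
  intros H Hl. induction p as [|[c es] p IH]; simpl.
  - rewrite Rabs_R0; lra.
  - intros Hw. apply andb_prop in Hw as [H1 H2]. apply Nat.leb_le in H1.
    eapply Rle_trans; [apply Rabs_triang|]. rewrite Rmult_plus_distr_r.
    apply Rplus_le_compat; [|now apply IH].
    rewrite Rabs_mult, Rmult_assoc. apply Rmult_le_compat_l; [apply Rabs_pos|].
    eapply Rle_trans; [apply (evalM_bnd l vs bs ws es H)|].
    apply Rmult_le_compat_l; [eapply bndM_ge0; eauto|].
    apply pow_le_w; auto. split; auto; apply Rabs_pos.
Qed.

Lemma bndP_ge0 l vs bs ws p : envok l vs bs ws -> 0 <= bndP bs p.
Proof.
  intros E. induction p as [|[c es] p IH]; simpl; [lra|].
  apply Rplus_le_le_0_compat; auto. apply Rmult_le_pos; [apply Rabs_pos|]. eapply bndM_ge0; eauto.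
Qed.

Lemma Rabs_bt a b : Rabs a <= b -> - b <= a <= b.
Proof. intros H. pose proof (Rle_abs a). pose proof (Rle_abs (- a)). rewrite Rabs_Ropp in H1. lra. Qed.


Lemma cosh_pos' x : 0 < cosh x.
Proof. unfold cosh. pose proof (exp_pos x). pose proof (exp_pos (-x)). lra. Qed.

Lemma cosh_sinh x : cosh x ^ 2 - sinh x ^ 2 = 1.
Proof.
  unfold cosh, sinh. replace 1 with (exp x * exp (-x)).
  field. rewrite <- exp_plus. replace (x + - x) with 0 by ring. apply exp_0.
Qed.

Lemma tanh_pos x : 0 < x -> 0 < tanh x.
Proof.
  intros Hx. unfold tanh. apply Rdiv_lt_0_compat; [|apply cosh_pos'].
  rewrite <- sinh_0. now apply sinh_lt.
Qed.

Lemma is_derive_tanh x : is_derive tanh x (1 - tanh x ^ 2).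
Proof.
  assert (H := is_derive_div sinh cosh x (cosh x) (sinh x)).
  unfold tanh. 
  replace (1 - (sinh x / cosh x) ^ 2) with ((cosh x * cosh x - sinh x * sinh x) / cosh x ^ 2).
  2:{ pose proof (cosh_pos' x). field; lra. }
  apply H. apply is_derive_Reals, derivable_pt_lim_sinh. apply is_derive_Reals, derivable_pt_lim_cosh.
  pose proof (cosh_pos' x); lra.
Qed.

Definition gT x := x * tanh x.
Lemma gT_pos x : 0 < x -> 0 < gT x.
Proof. intros; unfold gT; pose proof (tanh_pos x H); nra. Qed.

Inductive fexp := Cst (c : R) | Xr | Tt | Yy | Uu | Add (a b : fexp) | Mul (a b : fexp).
Fixpoint ev (e : fexp) (x : R) : R :=
  match e with
  | Cst c => c | Xr => x | Tt => tanh x | Yy => sqrt (gT x) | Uu => / sqrt (gT x)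
  | Add a b => ev a x + ev b x | Mul a b => ev a x * ev b x end.
Definition gp := Add Tt (Mul Xr (Add (Cst 1) (Mul (Cst (-1)) (Mul Tt Tt)))).
Fixpoint der (e : fexp) : fexp :=
  match e with
  | Cst _ => Cst 0 | Xr => Cst 1 | Tt => Add (Cst 1) (Mul (Cst (-1)) (Mul Tt Tt))
  | Yy => Mul (Mul gp Uu) (Cst (1/2))
  | Uu => Mul (Mul (Cst (-1/2)) (Mul Uu (Mul Uu Uu))) gp
  | Add a b => Add (der a) (der b)
  | Mul a b => Add (Mul (der a) b) (Mul a (der b)) end.

Lemma is_derive_gT x : is_derive gT x (ev gp x).
Proof.
  unfold gT. simpl. 
  replace (tanh x + x * (1 + -1 * (tanh x * tanh x))) with (1 * tanh x + x * (1 - tanh x ^ 2)) by ring.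
  apply is_derive_Reals. apply (derivable_pt_lim_mult (fun x => x) tanh).
  apply derivable_pt_lim_id. apply is_derive_Reals, is_derive_tanh.
Qed.

Lemma ev_der e x : 0 < x -> is_derive (ev e) x (ev (der e) x).
Proof.
  intros Hx. pose proof (gT_pos x Hx) as Hg. pose proof (sqrt_lt_R0 _ Hg) as Hs.
  induction e; simpl.
  - apply is_derive_Reals, derivable_pt_lim_const.
  - apply is_derive_Reals, derivable_pt_lim_id.
  - replace (1 + -1 * (tanh x * tanh x)) with (1 - tanh x ^ 2) by ring. apply is_derive_tanh.
  - match goal with |- is_derive _ _ ?v => replace v with (ev gp x / (2 * sqrt (gT x))) by (simpl; field; lra) end.
    apply is_derive_sqrt; auto. apply is_derive_gT.
  - match goal with |- is_derive _ _ ?v => replace v with (- (ev gp x / (2 * sqrt (gT x))) / (sqrt (gT x)) ^ 2) by (simpl; field; lra) end.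
    apply (is_derive_inv (fun y => sqrt (gT y))); [|lra].
    apply is_derive_sqrt; auto. apply is_derive_gT.
  - apply is_derive_Reals. apply (derivable_pt_lim_plus (ev e1) (ev e2)); now apply is_derive_Reals.
  - apply is_derive_Reals. apply (derivable_pt_lim_mult (ev e1) (ev e2)); now apply is_derive_Reals.
Qed.

Definition fam (k : nat) : fexp := Nat.iter k der Yy.

Lemma F_pos x : 0 < x -> F x = sqrt (gT x).
Proof. intros Hx; unfold F; destruct (Rle_dec 0 x); [reflexivity|lra]. Qed.

Lemma loc_pos x : 0 < x -> locally x (fun t => 0 < t).
Proof.
  intros Hx. exists (mkposreal x Hx). intros y Hy. 
  unfold ball in Hy; simpl in Hy; unfold AbsRing_ball, abs, minus, plus, opp in Hy; simpl in Hy.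
  apply Rabs_lt_between in Hy. lra.
Qed.

Lemma Derive_n_F k : forall x, 0 < x -> Derive_n F k x = ev (fam k) x /\ ex_derive_n F k x.
Proof.
  induction k; intros x Hx.
  - simpl. split; [now apply F_pos | exact I].
  - assert (Hl : locally x (fun t => ev (fam k) t = Derive_n F k t)).
    { eapply filter_imp; [|apply (loc_pos x Hx)]. intros t Ht. symmetry; now apply IHk. }
    split.
    + simpl. rewrite <- (Derive_ext_loc _ _ _ Hl). apply is_derive_unique.
      apply ev_der; auto.
    + simpl. eapply ex_derive_ext_loc; [apply Hl|]. eexists; apply ev_der; auto.
Qed.


Lemma ev_cont e t : 0 < t -> continuity_pt (ev e) t.
Proof.
  intros Ht. apply derivable_continuous_pt. exists (ev (der e) t).
  apply is_derive_Reals, ev_der, Ht.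
Qed.

Lemma ev_bound e a b : 0 < a -> a <= b -> exists M, 0 <= M /\ forall t, a <= t <= b -> Rabs (ev e t) <= M.
Proof.
  intros Ha Hab.
  destruct (continuity_ab_maj (ev e) a b Hab) as [m1 [H1 _]].
  { intros c Hc; apply ev_cont; lra. }
  destruct (continuity_ab_maj (fun t => - ev e t) a b Hab) as [m2 [H2 _]].
  { intros c Hc; apply continuity_pt_opp, ev_cont; lra. }
  exists (Rabs (ev e m1) + Rabs (ev e m2)). split. 
  pose proof (Rabs_pos (ev e m1)); pose proof (Rabs_pos (ev e m2)); lra.
  intros t Ht. specialize (H1 t Ht). specialize (H2 t Ht).
  pose proof (Rle_abs (ev e m1)); pose proof (Rabs_maj2 (ev e m2)).
  pose proof (Rabs_pos (ev e m1)); pose proof (Rabs_pos (ev e m2)).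
  apply Rabs_le; split; lra.
Qed.

Lemma fact_INR5 : INR (Factorial.fact 5) = 120.
Proof. change (Factorial.fact 5) with 120%nat. rewrite INR_IZR_INZ. simpl. lra. Qed.

Definition T4 (k h : R) : R :=
  F k + h * dF 1 k + h ^ 2 / 2 * dF 2 k + h ^ 3 / 6 * dF 3 k + h ^ 4 / 24 * dF 4 k.

Lemma sum4 (h : R) (g : nat -> R) :
  sum_f_R0 (fun m => h ^ m / INR (Factorial.fact m) * g m) 4 =
  g 0%nat + h * g 1%nat + h ^ 2 / 2 * g 2%nat + h ^ 3 / 6 * g 3%nat + h ^ 4 / 24 * g 4%nat.
Proof.
  simpl. field.
Qed.

Lemma taylorF k : 0 < k -> exists M, 0 <= M /\ forall h, Rabs h <= k / 2 ->
  Rabs (F (k + h) - T4 k h) <= M * Rabs h ^ 5.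
Proof.
  intros Hk. destruct (ev_bound (fam 5) (k/2) (3*k/2)) as [M5 [HM0 HM]]; try lra.
  exists (M5 / 120). split; [lra|]. intros h Hh.
  apply Rabs_le_between in Hh.
  destruct (Rtotal_order h 0) as [Hn|[H0|Hp]].
  -
    set (G := fun y => F (- y)).
    assert (Hex : forall t, - k <= t <= - k - h -> forall n, ex_derive_n G n t).
    { intros t Ht n. apply ex_derive_n_comp_opp.
      eapply filter_imp; [|apply (loc_pos (- t)); lra].
      intros y Hy k' _. now apply Derive_n_F. }
    destruct (Taylor_Lagrange G 4 (-k) (-k - h)) as [z [Hz Heq]]; try lra.
    { intros; apply Hex; auto. }
    rewrite sum4 in Heq. unfold G in Heq.
    rewrite !Derive_n_comp_opp in Heq;
      try (eapply filter_imp; [|apply (loc_pos (- _)); lra]; intros y Hy k' _; now apply Derive_n_F).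
    rewrite fact_INR5 in Heq. rewrite !Ropp_involutive in Heq. change (Derive_n F 0 k) with (F k) in Heq.
    replace (- (- k - h)) with (k + h) in Heq by ring.
    replace (- k - h - - k) with (- h) in Heq by ring.
    rewrite Heq. unfold T4, dF.
    rewrite (proj1 (Derive_n_F 5 (- z) ltac:(lra))).
    match goal with |- Rabs ?e <= _ => replace e with (h ^ 5 / 120 * ev (fam 5) (- z)) by field end.
    rewrite Rabs_mult. unfold Rdiv. rewrite Rabs_mult, RPow_abs.
    rewrite (Rabs_right (/ 120)) by lra.
    specialize (HM (- z) ltac:(lra)). pose proof (Rabs_pos (h ^ 5)).
    assert (Rabs (h ^ 5) * Rabs (ev (fam 5) (- z)) <= Rabs (h ^ 5) * M5) by (apply Rmult_le_compat_l; auto). lra.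
  - subst. replace (F (k + 0) - T4 k 0) with 0 by (unfold T4; rewrite Rplus_0_r; field).
    rewrite Rabs_R0. pose proof (pow_le (Rabs 0) 5 (Rabs_pos 0)). nra.
  - destruct (Taylor_Lagrange F 4 k (k + h)) as [z [Hz Heq]]; try lra.
    { intros t Ht n _. apply Derive_n_F; lra. }
    rewrite sum4, fact_INR5 in Heq. change (Derive_n F 0 k) with (F k) in Heq.
    replace (k + h - k) with h in Heq by ring.
    rewrite Heq. unfold T4, dF.
    rewrite (proj1 (Derive_n_F 5 z ltac:(lra))).
    match goal with |- Rabs ?e <= _ => replace e with (h ^ 5 / 120 * ev (fam 5) z) by field end.
    rewrite Rabs_mult. unfold Rdiv. rewrite Rabs_mult, RPow_abs.
    rewrite (Rabs_right (/ 120)) by lra.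
    specialize (HM z ltac:(lra)). pose proof (Rabs_pos (h ^ 5)).
    assert (Rabs (h ^ 5) * Rabs (ev (fam 5) z) <= Rabs (h ^ 5) * M5) by (apply Rmult_le_compat_l; auto). lra.
Qed.

Definition LA (ik : R) : list (R * list nat) := [(((1/2)*ik), [0%nat;2%nat]);
  (((-1/8)*ik^3), [0%nat;4%nat]);
  (((1)), [1%nat;0%nat]);
  (((-1/2)*ik^2), [1%nat;2%nat]);
  (((1/2)*ik^3), [2%nat;2%nat])].
Definition LQ1 (ik : R) : list (R * list nat) := [(((-1/8)*ik^4), [0%nat;6%nat]);
  (((1/64)*ik^6), [0%nat;8%nat]);
  (((-3/4)*ik^3), [1%nat;4%nat]);
  (((1/8)*ik^5), [1%nat;6%nat]);
  (((3/4)*ik^4), [2%nat;4%nat]);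
  (((-1/8)*ik^6), [2%nat;6%nat]);
  (((1)*ik^3), [3%nat;2%nat]);
  (((-1/2)*ik^5), [3%nat;4%nat]);
  (((1/4)*ik^6), [4%nat;4%nat])].
Definition LD2 (ik f1 f2 f3 f4 : R) : list (R * list nat) := [(((-3/8)*ik^3*f2 + (1/8)*ik^2*f3), [1%nat;4%nat]);
  (((1/16)*ik^5*f2 + (-1/8)*ik^4*f3 + (1/48)*ik^3*f4), [1%nat;6%nat]);
  (((5/128)*ik^6*f3 + (-5/192)*ik^5*f4), [1%nat;8%nat]);
  (((-1/256)*ik^8*f3 + (3/256)*ik^7*f4), [1%nat;10%nat]);
  (((-7/3072)*ik^9*f4), [1%nat;12%nat]);
  (((1/6144)*ik^11*f4), [1%nat;14%nat]);
  (((1/2)*ik^3*f2 + (-1/4)*ik^2*f3 + (1/12)*ik*f4), [3%nat;2%nat]);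
  (((-1/4)*ik^5*f2 + (3/8)*ik^4*f3 + (-7/48)*ik^3*f4), [3%nat;4%nat]);
  (((-5/24)*ik^6*f3 + (5/32)*ik^5*f4), [3%nat;6%nat]);
  (((1/32)*ik^8*f3 + (-17/192)*ik^7*f4), [3%nat;8%nat]);
  (((17/768)*ik^9*f4), [3%nat;10%nat]);
  (((-1/512)*ik^11*f4), [3%nat;12%nat]);
  (((1/12)*ik^3*f4), [5%nat;2%nat]);
  (((1/8)*ik^6*f3 + (-1/8)*ik^5*f4), [5%nat;4%nat]);
  (((-1/16)*ik^8*f3 + (1/8)*ik^7*f4), [5%nat;6%nat]);
  (((-11/192)*ik^9*f4), [5%nat;8%nat]);
  (((1/128)*ik^11*f4), [5%nat;10%nat]);
  (((1/48)*ik^9*f4), [7%nat;6%nat]);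
  (((-1/96)*ik^11*f4), [7%nat;8%nat])].
Definition LHh (ik f1 f2 f3 f4 : R) : list (R * list nat) := [(((-1/16)*ik^4*f2 + (1/48)*ik^3*f3), [0%nat;6%nat]);
  (((1/128)*ik^6*f2 + (-1/64)*ik^5*f3 + (1/384)*ik^4*f4), [0%nat;8%nat]);
  (((1/256)*ik^7*f3 + (-1/384)*ik^6*f4), [0%nat;10%nat]);
  (((-1/3072)*ik^9*f3 + (1/1024)*ik^8*f4), [0%nat;12%nat]);
  (((-1/6144)*ik^10*f4), [0%nat;14%nat]);
  (((1/98304)*ik^12*f4), [0%nat;16%nat]);
  (((3/8)*ik^4*f2 + (-5/16)*ik^3*f3 + (1/16)*ik^2*f4), [2%nat;4%nat]);
  (((-1/16)*ik^6*f2 + (3/16)*ik^5*f3 + (-3/32)*ik^4*f4), [2%nat;6%nat]);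
  (((-3/64)*ik^7*f3 + (47/768)*ik^6*f4), [2%nat;8%nat]);
  (((1/256)*ik^9*f3 + (-5/256)*ik^8*f4), [2%nat;10%nat]);
  (((3/1024)*ik^10*f4), [2%nat;12%nat]);
  (((-1/6144)*ik^12*f4), [2%nat;14%nat]);
  (((1/4)*ik^3*f3 + (-1/12)*ik^2*f4), [4%nat;2%nat]);
  (((1/8)*ik^6*f2 + (-1/4)*ik^5*f3 + (3/16)*ik^4*f4), [4%nat;4%nat]);
  (((1/8)*ik^7*f3 + (-17/96)*ik^6*f4), [4%nat;6%nat]);
  (((-1/64)*ik^9*f3 + (31/384)*ik^8*f4), [4%nat;8%nat]);
  (((-1/64)*ik^10*f4), [4%nat;10%nat]);
  (((1/1024)*ik^12*f4), [4%nat;12%nat]);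
  (((1/16)*ik^6*f4), [6%nat;4%nat]);
  (((1/48)*ik^9*f3 + (-1/16)*ik^8*f4), [6%nat;6%nat]);
  (((5/192)*ik^10*f4), [6%nat;8%nat]);
  (((-1/384)*ik^12*f4), [6%nat;10%nat]);
  (((1/384)*ik^12*f4), [8%nat;8%nat])].
Definition LE (ik f1 f2 f3 f4 b1 b3 : R) : list (R * list nat) := [(((1/2)*f2), [0%nat;2%nat]);
  (((1/24)*f4), [0%nat;4%nat]);
  (((1)*f2*b1), [1%nat;1%nat]);
  (((1/6)*f4*b1), [1%nat;3%nat]);
  (((1/2)*ik^3*f1 + (-1/2)*ik^2*f2 + (1/4)*ik*f3 + (1/4)*f4*b1^2), [2%nat;2%nat]);
  (((1)*ik^3*f1*b1 + (1)*f2*b3 + (-1)*ik^2*f2*b1 + (1/2)*ik*f3*b1 + (1/6)*f4*b1^3), [3%nat;1%nat]);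
  (((1/6)*f4*b3), [3%nat;3%nat]);
  (((1/2)*f4*b1*b3), [4%nat;2%nat]);
  (((1)*ik^3*f1*b3 + (-1)*ik^2*f2*b3 + (1/2)*ik*f3*b3 + (1/2)*f4*b1^2*b3), [5%nat;1%nat]);
  (((1)*ik^3*f1*b1*b3 + (1/2)*f2*b3^2 + (-1)*ik^2*f2*b1*b3 + (1/2)*ik*f3*b1*b3 + (1/6)*f4*b1^3*b3), [6%nat;0%nat]);
  (((1/4)*f4*b3^2), [6%nat;2%nat]);
  (((1/2)*f4*b1*b3^2), [7%nat;1%nat]);
  (((1/2)*ik^3*f1*b3^2 + (-1/2)*ik^2*f2*b3^2 + (1/4)*ik*f3*b3^2 + (1/4)*f4*b1^2*b3^2), [8%nat;0%nat]);
  (((1/6)*f4*b3^3), [9%nat;1%nat]);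
  (((1/6)*f4*b1*b3^3), [10%nat;0%nat]);
  (((1/24)*f4*b3^4), [12%nat;0%nat])].

Definition Ap (ik x l : R) := x + ik*l^2/2 - ik^2*x*l^2/2 + ik^3*x^2*l^2/2 - ik^3*l^4/8.
Definition Tp (f1 f2 f3 f4 h : R) := h*f1 + h^2/2*f2 + h^3/6*f3 + h^4/24*f4.
Definition E24 (ik f1 f2 f3 f4 x l : R) :=
  ik*f1*l^2/2 + f2*x^2/2 + (-ik^3*f1/8 + ik^2*f2/8)*l^4
  + (ik^3*f1/2 - ik^2*f2/2 + ik*f3/4)*x^2*l^2 + f4*x^4/24.
Definition c2f ik f1 f2 (b1 : R) := ik*f1/2 + f2*b1^2/2.
Definition c4f ik f1 f2 f3 f4 b1 b3 := ik^3*f1*b1^2/2 - ik^3*f1/8 + f2*b1*b3 - ik^2*f2*b1^2/2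
   + ik^2*f2/8 + ik*f3*b1^2/4 + f4*b1^4/24.

Lemma I1 ik x l : Ap ik x l = evalP [x;l] (LA ik).
Proof. unfold Ap, LA; simpl. field. Qed.
Lemma I2 k x l : k <> 0 -> Ap (/k) x l ^ 2 + 2 * k * Ap (/k) x l - (2*k*x + x^2 + l^2) = evalP [x;l] (LQ1 (/k)).
Proof. intros. unfold Ap, LQ1; simpl. field; auto. Qed.
Lemma I3 ik f1 f2 f3 f4 x l :
  (Tp f1 f2 f3 f4 (Ap ik x l) - Tp f1 f2 f3 f4 (Ap ik (-x) l)) / 2
   - ((f1 + f2*l^2*ik/2 - f1*l^2*ik^2/2)*x + f3*x^3/6) = evalP [x;l] (LD2 ik f1 f2 f3 f4).
Proof. unfold Ap, Tp, LD2; simpl. field. Qed.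
Lemma I4 ik f1 f2 f3 f4 x l :
  (Tp f1 f2 f3 f4 (Ap ik x l) + Tp f1 f2 f3 f4 (Ap ik (-x) l)) / 2
   - E24 ik f1 f2 f3 f4 x l = evalP [x;l] (LHh ik f1 f2 f3 f4).
Proof. unfold Ap, Tp, E24, LHh; simpl. field. Qed.
Lemma I5 ik f1 f2 f3 f4 b1 b3 l e :
  E24 ik f1 f2 f3 f4 (b1*l + b3*l^3 + e) l - c2f ik f1 f2 b1 * l^2 - c4f ik f1 f2 f3 f4 b1 b3 * l^4
  = evalP [l;e] (LE ik f1 f2 f3 f4 b1 b3).
Proof. unfold E24, c2f, c4f, LE; simpl. field. Qed.


Lemma envok2 l x K : 0 <= K -> Rabs x <= K * Rabs l -> envok l [x; l] [K; 1] [1%nat; 1%nat].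
Proof.
  intros HK Hx. apply envok_cons; [auto|simpl; lra|].
  apply envok_cons; [lra|simpl; lra|]. apply envok_nil.
Qed.

Lemma alpha_exp k K : 0 < k -> 0 <= K -> exists d0 C1 Cr, 0 < d0 <= 1 /\ 0 <= C1 /\ 0 <= Cr /\
  forall x l, Rabs x <= K * Rabs l -> Rabs l <= d0 ->
   Rabs (sqrt ((k + x)^2 + l^2) - k) <= C1 * Rabs l /\ Rabs (Ap (/k) x l) <= C1 * Rabs l /\
   Rabs (sqrt ((k + x)^2 + l^2) - k - Ap (/k) x l) <= Cr * Rabs l ^ 5 /\
   Rabs (sqrt ((k + x)^2 + l^2) - k) <= k/2.
Proof.
  intros Hk HK.
  set (CA := bndP [K;1] (LA (/k))). set (CQ := bndP [K;1] (LQ1 (/k))).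
  set (Cs := 2*k*K + K^2 + 1).
  assert (E0 : envok 0 [0;0] [K;1] [1%nat;1%nat]) by (apply envok2; auto; rewrite Rabs_R0; lra).
  assert (HCA : 0 <= CA) by (eapply bndP_ge0; eauto).
  assert (HCQ : 0 <= CQ) by (eapply bndP_ge0; eauto).
  assert (HCs : 0 < Cs) by (unfold Cs; nra).
  set (C1 := Cs / k + CA).
  assert (HC1 : 0 <= C1) by (unfold C1; apply Rplus_le_le_0_compat; auto; apply Rlt_le, Rdiv_lt_0_compat; auto).
  exists (Rmin 1 (k / (2 * (C1 + 1)))), C1, (CQ / k).
  assert (Hd : 0 < k / (2 * (C1 + 1))) by (apply Rdiv_lt_0_compat; lra).
  split; [split; [apply Rmin_glb_lt; lra | apply Rmin_l]|].
  split; [auto|]. split; [unfold Rdiv; apply Rmult_le_pos; [auto|apply Rlt_le, Rinv_0_lt_compat; auto]|].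
  intros x l Hx Hl.
  assert (Hl1 : Rabs l <= 1) by (eapply Rle_trans; [apply Hl|apply Rmin_l]).
  assert (Hl2 : Rabs l <= k / (2 * (C1 + 1))) by (eapply Rle_trans; [apply Hl|apply Rmin_r]).
  assert (E : envok l [x;l] [K;1] [1%nat;1%nat]) by (apply envok2; auto).
  assert (HA : Rabs (Ap (/k) x l) <= CA * Rabs l).
  { rewrite I1. pose proof (tool l _ _ _ 1 (LA (/k)) E Hl1 eq_refl). rewrite pow_1 in H. 
    unfold CA; lra. }
  assert (HQ : Rabs (evalP [x;l] (LQ1 (/k))) <= CQ * Rabs l ^ 5).
  { apply (tool l _ _ _ 5 (LQ1 (/k)) E Hl1 eq_refl). }
  rewrite <- I2 in HQ by lra.
  set (s := 2*k*x + x^2 + l^2) in *.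
  assert (Hs : Rabs s <= Cs * Rabs l).
  { unfold s, Cs. pose proof (Rabs_pos l). pose proof (Rabs_pos x).
    assert (Rabs x * Rabs x <= (K * Rabs l) * (K * Rabs l)) by (apply Rmult_le_compat; auto).
    assert (K^2 * (Rabs l * Rabs l) <= K^2 * Rabs l) by (apply Rmult_le_compat_l; [nra|nra]).
    assert (Rabs (x^2) <= K^2 * Rabs l) by (rewrite <- RPow_abs; simpl; nra).
    assert (Rabs (l^2) <= Rabs l) by (rewrite <- RPow_abs; simpl; nra).
    eapply Rle_trans; [apply Rabs_triang|]. eapply Rle_trans; [apply Rplus_le_compat_r, Rabs_triang|].
    rewrite Rabs_mult, Rabs_mult, (Rabs_right 2), (Rabs_right k) by lra. nra. }
  set (a := sqrt ((k + x)^2 + l^2)).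
  assert (Ha0 : 0 <= a) by apply sqrt_pos.
  assert (Ha2 : a * a = (k + x)^2 + l^2).
  { unfold a; apply sqrt_sqrt. apply Rplus_le_le_0_compat; apply pow2_ge_0. }
  assert (Hal : (a - k) * (a - k + 2 * k) = s) by (unfold s; nra).
  assert (Hak : Rabs (a - k) <= Cs / k * Rabs l).
  { replace (a - k) with (s / (a + k)) by (field_simplify_eq; [nra|lra]).
    unfold Rdiv. rewrite Rabs_mult, Rabs_inv, (Rabs_right (a+k)) by lra.
    apply Rle_trans with (Rabs s * / k).
    apply Rmult_le_compat_l; [apply Rabs_pos|]. apply Rinv_le_contravar; lra.
    apply Rle_trans with (Cs * Rabs l * / k). apply Rmult_le_compat_r; [apply Rlt_le, Rinv_0_lt_compat; auto|auto].
    lra. }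
  assert (HC1l : C1 * Rabs l <= k / 2).
  { apply Rle_trans with (C1 * (k / (2 * (C1 + 1)))). apply Rmult_le_compat_l; auto.
    apply Rle_trans with ((C1 + 1) * (k / (2 * (C1 + 1)))). pose proof Hd; nra.
    right; field; lra. }
  assert (Hk1 : Rabs (a - k) <= C1 * Rabs l) by (unfold C1; pose proof (Rabs_pos l); nra).
  assert (HA1 : Rabs (Ap (/k) x l) <= C1 * Rabs l) by (unfold C1; pose proof (Rabs_pos l); assert (0 <= Cs / k) by (apply Rlt_le, Rdiv_lt_0_compat; auto); nra).
  split; [auto|]. split; [auto|]. split; [|lra].
  set (A := Ap (/k) x l) in *.
  assert (Hid : (a - k - A) * (a - k + A + 2 * k) = - (A ^ 2 + 2 * k * A - s)) by nra.
  assert (Hpos : k <= a - k + A + 2 * k) by (apply Rabs_bt in Hk1; apply Rabs_bt in HA1; lra).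
  replace (a - k - A) with (- (A ^ 2 + 2 * k * A - s) / (a - k + A + 2 * k)) by (field_simplify_eq; [lra|lra]).
  unfold Rdiv. rewrite Rabs_mult, Rabs_Ropp, Rabs_inv, (Rabs_right (a - k + A + 2 * k)) by lra.
  apply Rle_trans with (Rabs (A ^ 2 + 2 * k * A - s) * / k).
  apply Rmult_le_compat_l; [apply Rabs_pos|]. apply Rinv_le_contravar; lra.
  apply Rle_trans with (CQ * Rabs l ^ 5 * / k). apply Rmult_le_compat_r; [apply Rlt_le, Rinv_0_lt_compat; auto|auto].
  right; field; lra.
Qed.


Lemma opp_pow_odd (l : R) n : (- l) ^ n = if Nat.odd n then - (l ^ n) else l ^ n.
Proof.
  induction n; simpl; [reflexivity|].
  rewrite IHn. rewrite Nat.odd_succ, <- Nat.negb_odd. destruct (Nat.odd n); simpl; ring.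
Qed.

Definition oddp (a : nat -> R) (n : nat) : R := if Nat.odd n then a n else 0.

Lemma odd_part (a : nat -> R) (xi : R -> R) l :
  xi (- l) = - xi l -> is_pseries a l (xi l) -> is_pseries a (- l) (xi (- l)) ->
  is_pseries (oddp a) l (xi l).
Proof.
  intros Hodd H1 H2. unfold is_pseries in *.
  pose proof (is_series_scal (/2) _ _ (is_series_minus _ _ _ _ H1 H2)) as H.
  match type of H with is_series _ ?v => replace v with (xi l) in H end.
  2:{ rewrite Hodd. unfold scal, plus, opp; simpl. unfold mult; simpl. field. }
  eapply is_series_ext; [|exact H].
  intros n. unfold scal, plus, opp; simpl. unfold mult; simpl. rewrite !pow_n_pow.
  rewrite opp_pow_odd. unfold oddp. destruct (Nat.odd n); field.
Qed.

Lemma sum_ge_term (t : nat -> R) N n : (n <= N)%nat -> t n <= sum_f_R0 (fun k => Rabs (t k)) N.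
Proof.
  induction N; intros Hn.
  - assert (n = 0%nat) by lia; subst; simpl. apply Rle_abs.
  - destruct (Nat.eq_dec n (S N)).
    + subst. simpl. pose proof (cond_pos_sum (fun k => Rabs (t k)) N ltac:(intros; apply Rabs_pos)).
      pose proof (Rle_abs (t (S N))). lra.
    + simpl. pose proof (Rabs_pos (t (S N))). specialize (IHN ltac:(lia)). lra.
Qed.

Lemma lim0_bounded (t : nat -> R) : is_lim_seq t 0 -> exists M, forall n, Rabs (t n) <= M.
Proof.
  intros H. apply is_lim_seq_spec in H. destruct (H (mkposreal 1 Rlt_0_1)) as [N HN].
  exists (1 + sum_f_R0 (fun k => Rabs (Rabs (t k))) N). intros n.
  destruct (Compare_dec.le_lt_dec N n) as [Hle|Hlt].
  - specialize (HN n Hle). simpl in HN. rewrite Rminus_0_r in HN.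
    pose proof (cond_pos_sum (fun k => Rabs (Rabs (t k))) N ltac:(intros; apply Rabs_pos)). lra.
  - pose proof (sum_ge_term (fun k => Rabs (t k)) N n ltac:(lia)). simpl in H0. lra.
Qed.

Lemma pseries_R (a : nat -> R) x l : is_pseries a x l <-> is_series (fun k => a k * x ^ k) l.
Proof.
  unfold is_pseries; split; intros H; (eapply is_series_ext; [|exact H]); intros n; rewrite pow_n_pow; apply Rmult_comm.
Qed.

Lemma xi_expand (xi : R -> R) (a : nat -> R) r d :
  0 < r -> (forall l, Rabs l < r -> xi (- l) = - xi l /\ is_pseries a l (xi l)) ->
  is_derive xi 0 d ->
  exists Ct rho, 0 < rho /\ 0 <= Ct /\ d = a 1%nat /\
    forall l, Rabs l <= rho -> Rabs (xi l - a 1%nat * l - a 3%nat * l ^ 3) <= Ct * Rabs l ^ 5.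
Proof.
  intros Hr H Hd.
  set (b := oddp a).
  assert (Hb : forall l, Rabs l < r -> is_pseries b l (xi l)).
  { intros l Hl. destruct (H l Hl) as [H1 H2].
    assert (Hl' : Rabs (- l) < r) by (rewrite Rabs_Ropp; auto).
    apply odd_part; auto. apply (proj2 (H (- l) Hl')). }
  set (rp := r / 2).
  assert (Hrp : 0 < rp) by (unfold rp; lra).
  assert (Hrp1 : Rabs rp < r) by (rewrite Rabs_right; unfold rp; lra).
  pose proof (proj1 (pseries_R _ _ _) (Hb rp Hrp1)) as Hs.
  destruct (lim0_bounded _ (ex_series_lim_0 _ (ex_intro _ _ Hs))) as [M HM].
  assert (HM0 : 0 <= M) by (eapply Rle_trans; [apply Rabs_pos|apply (HM 0%nat)]).
  assert (Hrad : Rbar_lt 0 (CV_radius b)).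
  { apply Rbar_lt_le_trans with (Finite rp); [simpl; auto|].
    apply (proj1 (CV_radius_bounded b)). exists M. intros n. apply HM. }
  exists (2 * M / rp ^ 5), (r / 4).
  split; [lra|]. split.
  { apply Rmult_le_pos; [lra|]. apply Rlt_le, Rinv_0_lt_compat, pow_lt; auto. }
  split.
  {
    assert (Hloc : locally 0 (fun t => PSeries b t = xi t)).
    { exists (mkposreal r Hr). intros t Ht. apply is_pseries_unique, Hb.
      unfold ball in Ht; simpl in Ht; unfold AbsRing_ball, abs, minus, plus, opp in Ht; simpl in Ht.
      rewrite Ropp_0, Rplus_0_r in Ht. auto. }
    assert (Hd2 : is_derive xi 0 (PSeries (PS_derive b) 0)).
    { eapply is_derive_ext_loc; [exact Hloc|]. apply is_derive_PSeries. rewrite Rabs_R0; auto. }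
    rewrite PSeries_0 in Hd2. unfold PS_derive, b, oddp in Hd2. simpl in Hd2.
    assert (E1 := is_derive_unique _ _ _ Hd). assert (E2 := is_derive_unique _ _ _ Hd2). rewrite E1 in E2. rewrite E2. apply Rmult_1_l. }
  intros l Hl.
  assert (Hlr : Rabs l < r) by lra.
  assert (Hex : ex_pseries b l) by (eexists; apply Hb; auto).
  rewrite <- (is_pseries_unique _ _ _ (Hb l Hlr)).
  rewrite (PSeries_decr_n b 4 l Hex).
  replace (sum_f_R0 (fun k : nat => b k * l ^ k) 4) with (a 1%nat * l + a 3%nat * l ^ 3)
    by (unfold b, oddp; simpl; ring).
  match goal with |- Rabs ?e <= _ => replace e with (l ^ 5 * PSeries (PS_decr_n b 5) l) by ring end.
  rewrite Rabs_mult, <- RPow_abs, Rmult_comm.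
  apply Rmult_le_compat_r; [apply pow_le, Rabs_pos|].
  set (q := Rabs l / rp).
  assert (Hq : 0 <= q <= 1/2) by (unfold q, rp; split; [apply Rmult_le_pos; [apply Rabs_pos|apply Rlt_le, Rinv_0_lt_compat; auto]|];
     apply Rle_trans with ((r/4) / (r/2)); [unfold Rdiv; apply Rmult_le_compat_r; [apply Rlt_le, Rinv_0_lt_compat; lra|lra]|right; field; lra]).
  set (g := fun n => M / rp ^ 5 * q ^ n).
  assert (Hg : is_series g (M / rp ^ 5 * / (1 - q))).
  { assert (Hq1 : Rabs q < 1) by (rewrite Rabs_right; lra).
    exact (is_series_scal (M / rp ^ 5) _ _ (is_series_geom q Hq1)). }
  assert (Hterm : forall n, Rabs (PS_decr_n b 5 n * l ^ n) <= g n).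
  { intros n. unfold PS_decr_n, g. specialize (HM (5 + n)%nat).
    rewrite Rabs_mult in *. rewrite <- RPow_abs.
    rewrite (Rabs_right (rp ^ (5 + n))) in HM by (apply Rle_ge, pow_le; lra).
    replace (Rabs l) with (q * rp) by (unfold q; field; lra).
    set (B := Rabs (b (5 + n)%nat)) in *.
    replace (B * (q * rp) ^ n) with ((B * rp ^ (5 + n)) * q ^ n / rp ^ 5)
      by (rewrite Rpow_mult_distr, pow_add; field; lra).
    unfold Rdiv. apply Rle_trans with (M * q ^ n * / rp ^ 5); [|right; ring].
    apply Rmult_le_compat_r; [apply Rlt_le, Rinv_0_lt_compat, pow_lt; lra|].
    apply Rmult_le_compat_r; [apply pow_le; lra|auto]. }
  assert (Hexg : ex_series g) by (eexists; exact Hg).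
  assert (Hexa : ex_series (fun n => Rabs (PS_decr_n b 5 n * l ^ n))).
  { apply (@ex_series_le R_AbsRing R_CompleteNormedModule _ g); auto. intros n. unfold norm; simpl. unfold abs; simpl. rewrite Rabs_Rabsolu. apply Hterm. }
  unfold PSeries. eapply Rle_trans; [apply Series_Rabs; auto|].
  eapply Rle_trans; [apply (Series_le _ g); auto; intros n; split; [apply Rabs_pos|apply Hterm]|].
  rewrite (is_series_unique _ _ Hg).
  assert (0 <= M / rp ^ 5) by (apply Rmult_le_pos; [auto|apply Rlt_le, Rinv_0_lt_compat, pow_lt; lra]).
  assert (/ (1 - q) <= 2) by (apply Rle_trans with (/ (1/2)); [apply Rinv_le_contravar; lra| right; field]).
  replace (2 * M / rp ^ 5) with (M / rp ^ 5 * 2) by (field; lra).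
  apply Rmult_le_compat_l; auto.
Qed.


Definition LT (f1 f2 f3 f4 : R) : list (R * list nat) :=
  [(f1, [1%nat;0%nat;0%nat]); (f2/2, [1%nat;1%nat;0%nat]); (f2/2, [1%nat;0%nat;1%nat]);
   (f3/6, [1%nat;2%nat;0%nat]); (f3/6, [1%nat;1%nat;1%nat]); (f3/6, [1%nat;0%nat;2%nat]);
   (f4/24, [1%nat;3%nat;0%nat]); (f4/24, [1%nat;2%nat;1%nat]); (f4/24, [1%nat;1%nat;2%nat]);
   (f4/24, [1%nat;0%nat;3%nat])].

Lemma ILT f1 f2 f3 f4 u v : Tp f1 f2 f3 f4 u - Tp f1 f2 f3 f4 v = evalP [u - v; u; v] (LT f1 f2 f3 f4).
Proof. unfold Tp, LT; simpl. field. Qed.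

Lemma branch k K : 0 < k -> 0 <= K -> exists d0 C1 CB CT, 0 < d0 <= 1 /\ 0 <= C1 /\ 0 <= CB /\ 0 <= CT /\
  forall x l, Rabs x <= K * Rabs l -> Rabs l <= d0 ->
   let al := sqrt ((k + x)^2 + l^2) - k in
   Rabs al <= C1 * Rabs l /\
   Rabs (F (k + al) - F k - Tp (dF 1 k) (dF 2 k) (dF 3 k) (dF 4 k) al) <= CB * Rabs l ^ 5 /\
   Rabs (Tp (dF 1 k) (dF 2 k) (dF 3 k) (dF 4 k) al - Tp (dF 1 k) (dF 2 k) (dF 3 k) (dF 4 k) (Ap (/k) x l))
     <= CT * Rabs l ^ 5.
Proof.
  intros Hk HK.
  destruct (alpha_exp k K Hk HK) as [d0 [C1 [Cr [Hd0 [HC1 [HCr Ha]]]]]].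
  destruct (taylorF k Hk) as [M [HM HT]].
  set (fs := LT (dF 1 k) (dF 2 k) (dF 3 k) (dF 4 k)).
  exists d0, C1, (M * C1 ^ 5), (bndP [Cr; C1; C1] fs).
  assert (E0 : envok 0 [0;0;0] [Cr; C1; C1] [5%nat;1%nat;1%nat]).
  { repeat (apply envok_cons; [auto|rewrite Rabs_R0; simpl; lra|]). apply envok_nil. }
  split; [auto|]. split; [auto|]. split; [apply Rmult_le_pos; auto; apply pow_le; auto|].
  split; [eapply bndP_ge0; eauto|].
  intros x l Hx Hl al.
  destruct (Ha x l Hx Hl) as [Hal [HA [Hr Hk2]]]. fold al in Hal, Hr, Hk2.
  split; [auto|]. split.
  - specialize (HT al Hk2). unfold T4 in HT.
    match goal with |- Rabs ?e <= _ => replace e with (F (k + al) - (F k + al * dF 1 k + al ^ 2 / 2 * dF 2 k + al ^ 3 / 6 * dF 3 k + al ^ 4 / 24 * dF 4 k)) by (unfold Tp; field) end.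
    eapply Rle_trans; [apply HT|]. rewrite Rmult_assoc. apply Rmult_le_compat_l; auto.
    rewrite <- Rpow_mult_distr. apply pow_incr. split; [apply Rabs_pos|auto].
  - rewrite ILT. apply (tool l _ [Cr;C1;C1] [5%nat;1%nat;1%nat] 5 fs); [|lra|reflexivity].
    repeat apply envok_cons; simpl; try rewrite Rmult_1_r; auto; try apply envok_nil. lra.
Qed.

Lemma lam_eq k z l : 0 < k -> lam_minus k 1 l z = lam_plus k (-1) l z ->
  F (absnk k 1 l z) + F (absnk k (-1) l z) = 2 * F k.
Proof.
  intros Hk H. apply (f_equal snd) in H. unfold lam_minus, lam_plus in H.
  simpl in H. 
  assert (Ht := tanh_pos k Hk).
  assert (Hs : sqrt (mu0 k) * F k = k).
  { rewrite F_pos by auto. unfold mu0, gT. rewrite <- sqrt_mult.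
    replace (k / tanh k * (k * tanh k)) with (k * k) by (field; lra). apply sqrt_square; lra.
    apply Rlt_le, Rdiv_lt_0_compat; auto. nra. }
  assert (Hmu : 0 < sqrt (mu0 k)) by (apply sqrt_lt_R0; unfold mu0; apply Rdiv_lt_0_compat; auto).
  apply (Rmult_eq_reg_l (sqrt (mu0 k))); [|lra].
  rewrite Rmult_plus_distr_l. rewrite (Rmult_comm 2), <- Rmult_assoc, Hs.
  lra.
Qed.

Lemma tanh_lt1 x : tanh x < 1.
Proof.
  unfold tanh. pose proof (cosh_pos' x). apply (Rmult_lt_reg_r (cosh x)); auto.
  unfold Rdiv. rewrite Rmult_assoc, Rinv_l by lra. unfold sinh, cosh. pose proof (exp_pos (-x)). lra.
Qed.

Lemma f1_pos k : 0 < k -> 0 < dF 1 k.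
Proof.
  intros Hk. unfold dF. rewrite (proj1 (Derive_n_F 1 k Hk)). simpl.
  pose proof (tanh_pos k Hk). pose proof (tanh_lt1 k).
  pose proof (sqrt_lt_R0 _ (gT_pos k Hk)).
  apply Rmult_lt_0_compat; [|lra]. apply Rmult_lt_0_compat; [|apply Rinv_0_lt_compat; auto].
  assert (0 <= k * (1 + -1 * (tanh k * tanh k))) by (apply Rmult_le_pos; nra). lra.
Qed.

Lemma small_zero c C d : 0 < d -> (forall l, 0 < l < d -> Rabs c <= C * l) -> c = 0.
Proof.
  intros Hd H. destruct (Req_dec c 0) as [|Hc]; auto. exfalso.
  assert (Hc' : 0 < Rabs c) by (apply Rabs_pos_lt; auto).
  set (l := Rmin (d/2) (Rabs c / (2 * (Rabs C + 1)))).
  assert (Hl0 : 0 < l) by (apply Rmin_glb_lt; [lra|apply Rdiv_lt_0_compat; pose proof (Rabs_pos C); lra]).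
  assert (Hl1 : l < d) by (pose proof (Rmin_l (d/2) (Rabs c / (2 * (Rabs C + 1)))); unfold l in *; lra).
  specialize (H l (conj Hl0 Hl1)).
  assert (Hl2 : l <= Rabs c / (2 * (Rabs C + 1))) by apply Rmin_r.
  assert (C * l <= Rabs C * l) by (apply Rmult_le_compat_r; [lra|apply Rle_abs]).
  assert ((Rabs C + 1) * l <= Rabs c / 2).
  { apply Rle_trans with ((Rabs C + 1) * (Rabs c / (2 * (Rabs C + 1)))).
    apply Rmult_le_compat_l; [pose proof (Rabs_pos C); lra|auto]. right; field. pose proof (Rabs_pos C); lra. }
  nra.
Qed.

Lemma coefzero c2 c4 C d : 0 < d -> 0 <= C ->
  (forall l, Rabs l < d -> Rabs (c2 * l ^ 2 + c4 * l ^ 4) <= C * Rabs l ^ 5) -> c2 = 0 /\ c4 = 0.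
Proof.
  intros Hd HC H. set (d1 := Rmin d 1).
  assert (Hd1 : 0 < d1) by (apply Rmin_glb_lt; lra).
  assert (Hc2 : c2 = 0).
  { apply (small_zero c2 (C + Rabs c4) d1 Hd1). intros l [Hl0 Hl1].
    assert (Hld : l < d) by (pose proof (Rmin_l d 1); unfold d1 in *; lra).
    assert (Hl1' : l < 1) by (pose proof (Rmin_r d 1); unfold d1 in *; lra).
    specialize (H l ltac:(rewrite Rabs_right; lra)). rewrite (Rabs_right l) in H by lra.
    assert (Hl2 : 0 < l ^ 2) by (apply pow_lt; lra).
    apply (Rmult_le_reg_r (l ^ 2)); auto.
    assert (Rabs (c2 * l^2) <= Rabs (c2 * l ^ 2 + c4 * l ^ 4) + Rabs (c4 * l ^ 4)).
    { replace (c2 * l^2) with ((c2 * l ^ 2 + c4 * l ^ 4) + - (c4 * l ^ 4)) at 1 by ring.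
      eapply Rle_trans; [apply Rabs_triang|]. rewrite Rabs_Ropp; lra. }
    rewrite Rabs_mult, (Rabs_right (l^2)) in H0 by lra. rewrite Rabs_mult, (Rabs_right (l^4)) in H0 by (apply Rle_ge, pow_le; lra).
    assert (l ^ 5 <= l ^ 3) by (apply pow_le_w; [lra|lia]).
    assert (l ^ 4 <= l ^ 3) by (apply pow_le_w; [lra|lia]).
    pose proof (Rabs_pos c4).
    assert (C * l ^ 5 <= C * l ^ 3) by (apply Rmult_le_compat_l; auto).
    assert (Rabs c4 * l ^ 4 <= Rabs c4 * l ^ 3) by (apply Rmult_le_compat_l; auto).
    replace ((C + Rabs c4) * l * l ^ 2) with (C * l ^ 3 + Rabs c4 * l ^ 3) by ring. lra. }
  split; auto. subst c2.
  apply (small_zero c4 C d1 Hd1). intros l [Hl0 Hl1].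
  assert (Hld : l < d) by (pose proof (Rmin_l d 1); unfold d1 in *; lra).
  specialize (H l ltac:(rewrite Rabs_right; lra)). rewrite (Rabs_right l) in H by lra.
  replace (0 * l ^ 2 + c4 * l ^ 4) with (c4 * l ^ 4) in H by ring.
  rewrite Rabs_mult, (Rabs_right (l^4)) in H by (apply Rle_ge, pow_le; lra).
  assert (Hl4 : 0 < l ^ 4) by (apply pow_lt; lra).
  apply (Rmult_le_reg_r (l ^ 4)); auto. replace (C * l * l ^ 4) with (C * l ^ 5) by ring. auto.
Qed.

Lemma final_alg k f1 f2 f3 f4 b1 b3 l : 0 < k -> 0 < f1 -> 0 < b1 ->
  c2f (/k) f1 f2 b1 = 0 -> c4f (/k) f1 f2 f3 f4 b1 b3 = 0 ->
  l * sqrt (- f1 / (k * f2)) * (1 + l ^ 2 / (2 * k ^ 2) * (3 / 4 - f1 / (k * f2)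
    + k / 4 * (f2 / f1 - 2 * (f3 / f2)) + k / 12 * (f4 * f1 / f2 ^ 2))) = b1 * l + b3 * l ^ 3.
Proof.
  intros Hk Hf1 Hb1 Hc2 Hc4. unfold c2f in Hc2.
  assert (H2 : f2 * b1 ^ 2 = - f1 / k) by (unfold Rdiv in *; lra).
  assert (Hf2 : f2 = - f1 / (k * b1 ^ 2)).
  { replace f2 with (f2 * b1 ^ 2 / b1 ^ 2) by (field; lra). rewrite H2. field; lra. }
  assert (Hf2n : f2 <> 0).
  { intros E. rewrite E in H2. assert (f1 / k = 0) by lra.
    assert (f1 = f1 / k * k) by (field; lra). nra. }
  assert (Hsq : - f1 / (k * f2) = b1 ^ 2).
  { rewrite Hf2. field. repeat split; lra. }
  rewrite Hsq, sqrt_pow2 by lra.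
  assert (Hb3 : b3 = - c4f (/k) f1 f2 f3 f4 b1 0 / (f2 * b1)).
  { assert (E : c4f (/k) f1 f2 f3 f4 b1 b3 = f2 * b1 * b3 + c4f (/k) f1 f2 f3 f4 b1 0) by (unfold c4f; ring).
    rewrite Hc4 in E. field_simplify_eq; [lra|split; lra]. }
  rewrite Hb3. unfold c4f. rewrite Hf2. field. repeat split; lra.
Qed.

Lemma absb v : - Rabs v <= v <= Rabs v.
Proof. apply Rabs_bt; lra. Qed.

Theorem lemma4p7 (kappa : R) (xi : R -> R) :
  0 < kappa -> is_xi_plus kappa xi ->
  (exists delta, 0 < delta /\ forall l, Rabs l < delta ->
     (F (omega kappa xi 1 l) + F (omega kappa xi (-1) l)) / 2 = F kappa)
  /\
  (exists C delta, 0 < delta /\ forall l, Rabs l < delta ->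
     Rabs ((F (omega kappa xi 1 l) - F (omega kappa xi (-1) l)) / 2
           - ((dF 1 kappa + (kappa * dF 2 kappa - dF 1 kappa) * l ^ 2 / (2 * kappa ^ 2))
                * xi l
              + / 6 * dF 3 kappa * xi l ^ 3))
     <= C * Rabs l ^ 5)
  /\
  (exists C delta, 0 < delta /\ forall l, Rabs l < delta ->
     Rabs (xi l
           - l * sqrt (- dF 1 kappa / (kappa * dF 2 kappa))
               * (1 + l ^ 2 / (2 * kappa ^ 2)
                    * (3 / 4 - dF 1 kappa / (kappa * dF 2 kappa)
                       + kappa / 4 * (dF 2 kappa / dF 1 kappa
                                      - 2 * (dF 3 kappa / dF 2 kappa))
                       + kappa / 12 * (dF 4 kappa * dF 1 kappa / (dF 2 kappa) ^ 2))))
     <= C * Rabs l ^ 5).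
Proof.
  intros Hk [[a [r [Hr Hall]]] [d [Hd Hdpos]]].
  destruct (xi_expand xi a r d Hr (fun l Hl => conj (proj1 (Hall l Hl)) (proj1 (proj2 (Hall l Hl)))) Hd)
    as [Ct [rho [Hrho [HCt [Hda Hxe]]]]].
  set (b1 := a 1%nat) in *. set (b3 := a 3%nat) in *.
  assert (Hb1 : 0 < b1) by (rewrite <- Hda; auto).
  set (K := b1 + Rabs b3 + Ct).
  assert (HK : 0 <= K) by (unfold K; pose proof (Rabs_pos b3); lra).
  destruct (branch kappa K Hk HK) as [d0 [C1 [CB [CT [Hd0 [HC1 [HCB [HCT Hbr]]]]]]]].
  assert (Hsum : forall l, Rabs l < r -> F (omega kappa xi 1 l) + F (omega kappa xi (-1) l) = 2 * F kappa).
  { intros l Hl. apply lam_eq; auto. apply (proj2 (proj2 (Hall l Hl))). }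
  assert (Hom1 : forall l, omega kappa xi 1 l = kappa + (sqrt ((kappa + xi l)^2 + l^2) - kappa)).
  { intros; unfold omega, absnk. replace (IZR 1 * kappa) with kappa by ring. ring. }
  assert (Hom2 : forall l, omega kappa xi (-1) l = kappa + (sqrt ((kappa + - xi l)^2 + l^2) - kappa)).
  { intros; unfold omega, absnk. replace ((IZR (-1) * kappa + xi l)^2) with ((kappa + - xi l)^2) by ring. ring. }
  split.
  { exists r. split; auto. intros l Hl. rewrite Hsum by auto. field. }
  set (del := Rmin (Rmin (r/2) rho) (Rmin 1 d0)).
  assert (Hdel : 0 < del) by (unfold del; repeat apply Rmin_glb_lt; lra).
  assert (Hdl : forall l, Rabs l < del -> Rabs l < r /\ Rabs l <= rho /\ Rabs l <= 1 /\ Rabs l <= d0).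
  { intros l Hl. unfold del in Hl.
    pose proof (Rmin_l (Rmin (r/2) rho) (Rmin 1 d0)). pose proof (Rmin_r (Rmin (r/2) rho) (Rmin 1 d0)).
    pose proof (Rmin_l (r/2) rho). pose proof (Rmin_r (r/2) rho). pose proof (Rmin_l 1 d0). pose proof (Rmin_r 1 d0).
    lra. }
  assert (Hxk : forall l, Rabs l < del -> Rabs (xi l) <= K * Rabs l).
  { intros l Hl. destruct (Hdl l Hl) as [_ [H2 [H3 _]]]. specialize (Hxe l H2).
    pose proof (Rabs_pos l).
    assert (Rabs l ^ 5 <= Rabs l) by (rewrite <- (pow_1 (Rabs l)) at 2; apply pow_le_w; [lra|lia]).
    assert (Rabs (l^3) <= Rabs l) by (rewrite <- RPow_abs; rewrite <- (pow_1 (Rabs l)) at 2; apply pow_le_w; [lra|lia]).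
    replace (xi l) with ((xi l - b1 * l - b3 * l ^ 3) + b1 * l + b3 * l ^ 3) by ring.
    eapply Rle_trans; [apply Rabs_triang|]. eapply Rle_trans; [apply Rplus_le_compat_r, Rabs_triang|].
    rewrite !Rabs_mult, (Rabs_right b1) by lra.
    assert (Ct * Rabs l ^ 5 <= Ct * Rabs l) by (apply Rmult_le_compat_l; auto).
    assert (Rabs b3 * Rabs (l ^ 3) <= Rabs b3 * Rabs l) by (apply Rmult_le_compat_l; auto; apply Rabs_pos).
    unfold K. lra. }
  assert (Hpt : forall l, Rabs l < del ->
    let x := xi l in
    let al := sqrt ((kappa + x)^2 + l^2) - kappa in
    let be := sqrt ((kappa + - x)^2 + l^2) - kappa in
    Rabs (F (kappa + al) - F kappa - Tp (dF 1 kappa) (dF 2 kappa) (dF 3 kappa) (dF 4 kappa) al) <= CB * Rabs l ^ 5 /\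
    Rabs (Tp (dF 1 kappa) (dF 2 kappa) (dF 3 kappa) (dF 4 kappa) al
          - Tp (dF 1 kappa) (dF 2 kappa) (dF 3 kappa) (dF 4 kappa) (Ap (/kappa) x l)) <= CT * Rabs l ^ 5 /\
    Rabs (F (kappa + be) - F kappa - Tp (dF 1 kappa) (dF 2 kappa) (dF 3 kappa) (dF 4 kappa) be) <= CB * Rabs l ^ 5 /\
    Rabs (Tp (dF 1 kappa) (dF 2 kappa) (dF 3 kappa) (dF 4 kappa) be
          - Tp (dF 1 kappa) (dF 2 kappa) (dF 3 kappa) (dF 4 kappa) (Ap (/kappa) (- x) l)) <= CT * Rabs l ^ 5).
  { intros l Hl x al be. destruct (Hdl l Hl) as [Hlr [Hlrho [Hl1 Hld0]]].
    specialize (Hxk l Hl). fold x in Hxk.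
    assert (Hxk' : Rabs (- x) <= K * Rabs l) by (rewrite Rabs_Ropp; auto).
    destruct (Hbr x l Hxk Hld0) as [_ [Ha2 Ha3]].
    destruct (Hbr (- x) l Hxk' Hld0) as [_ [Hb2 Hb3]].
    repeat split; auto. }
  split.
  { exists (bndP [K;1] (LD2 (/kappa) (dF 1 kappa) (dF 2 kappa) (dF 3 kappa) (dF 4 kappa)) + CT + CB), del.
    split; auto.
    intros l Hl. destruct (Hdl l Hl) as [Hlr [Hlrho [Hl1 Hld0]]].
    destruct (Hpt l Hl) as [T1 [T2 [T3 T4]]]. 
    specialize (Hxk l Hl).
    rewrite Hom1, Hom2.
    set (x := xi l) in *.
    set (al := sqrt ((kappa + x)^2 + l^2) - kappa) in *.
    set (be := sqrt ((kappa + - x)^2 + l^2) - kappa) in *.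
    pose proof (I3 (/kappa) (dF 1 kappa) (dF 2 kappa) (dF 3 kappa) (dF 4 kappa) x l) as HI.
    pose proof (tool l [x;l] [K;1] [1%nat;1%nat] 5 (LD2 (/kappa) (dF 1 kappa) (dF 2 kappa) (dF 3 kappa) (dF 4 kappa))
                  (envok2 l x K HK Hxk) Hl1 eq_refl) as HP.
    set (P := evalP [x; l] (LD2 (/kappa) (dF 1 kappa) (dF 2 kappa) (dF 3 kappa) (dF 4 kappa))) in *.
    set (Tf := Tp (dF 1 kappa) (dF 2 kappa) (dF 3 kappa) (dF 4 kappa)) in *.
    match goal with |- Rabs ?e <= _ => replace e with
      (P + ((Tf al - Tf (Ap (/kappa) x l)) - (Tf be - Tf (Ap (/kappa) (-x) l)))/2
         + ((F (kappa + al) - F kappa - Tf al) - (F (kappa + be) - F kappa - Tf be))/2) end.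
    2:{ rewrite <- HI. field. lra. }
    pose proof (absb P). pose proof (absb (Tf al - Tf (Ap (/kappa) x l))).
    pose proof (absb (Tf be - Tf (Ap (/kappa) (-x) l))).
    pose proof (absb (F (kappa + al) - F kappa - Tf al)). pose proof (absb (F (kappa + be) - F kappa - Tf be)).
    apply Rabs_le. split; lra. }
  set (f1 := dF 1 kappa) in *. set (f2 := dF 2 kappa) in *. set (f3 := dF 3 kappa) in *. set (f4 := dF 4 kappa) in *.
  set (CH := bndP [K;1] (LHh (/kappa) f1 f2 f3 f4) + CT + CB).
  set (CE := bndP [1; Ct] (LE (/kappa) f1 f2 f3 f4 b1 b3)).
  assert (HCH : 0 <= CH).
  { assert (E0 : envok 0 [0;0] [K;1] [1%nat;1%nat]) by (apply envok2; auto; rewrite Rabs_R0; lra).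
    pose proof (bndP_ge0 _ _ _ _ (LHh (/kappa) f1 f2 f3 f4) E0). unfold CH; lra. }
  assert (HCE : 0 <= CE).
  { assert (E0 : envok 0 [0;0] [1;Ct] [1%nat;5%nat]).
    { repeat (apply envok_cons; [auto; lra|rewrite Rabs_R0; simpl; lra|]). apply envok_nil. }
    apply (bndP_ge0 _ _ _ _ _ E0). }
  assert (HE : forall l, Rabs l < del -> Rabs (E24 (/kappa) f1 f2 f3 f4 (xi l) l) <= CH * Rabs l ^ 5).
  { intros l Hl. destruct (Hdl l Hl) as [Hlr [Hlrho [Hl1 Hld0]]].
    destruct (Hpt l Hl) as [T1 [T2 [T3 T4]]].
    specialize (Hxk l Hl). specialize (Hsum l Hlr). rewrite Hom1, Hom2 in Hsum.
    set (x := xi l) in *.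
    set (al := sqrt ((kappa + x)^2 + l^2) - kappa) in *.
    set (be := sqrt ((kappa + - x)^2 + l^2) - kappa) in *.
    pose proof (I4 (/kappa) f1 f2 f3 f4 x l) as HI.
    pose proof (tool l [x;l] [K;1] [1%nat;1%nat] 5 (LHh (/kappa) f1 f2 f3 f4)
                  (envok2 l x K HK Hxk) Hl1 eq_refl) as HP.
    set (P := evalP [x; l] (LHh (/kappa) f1 f2 f3 f4)) in *.
    set (Tf := Tp f1 f2 f3 f4) in *.
    set (EE := E24 (/kappa) f1 f2 f3 f4 x l) in *.
    pose proof (absb P). pose proof (absb (Tf al - Tf (Ap (/kappa) x l))).
    pose proof (absb (Tf be - Tf (Ap (/kappa) (-x) l))).
    pose proof (absb (F (kappa + al) - F kappa - Tf al)). pose proof (absb (F (kappa + be) - F kappa - Tf be)).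
    apply Rabs_le. unfold CH. split; lra. }
  assert (Hc : forall l, Rabs l < del ->
     Rabs (c2f (/kappa) f1 f2 b1 * l ^ 2 + c4f (/kappa) f1 f2 f3 f4 b1 b3 * l ^ 4) <= (CH + CE) * Rabs l ^ 5).
  { intros l Hl. destruct (Hdl l Hl) as [Hlr [Hlrho [Hl1 Hld0]]].
    specialize (HE l Hl). specialize (Hxe l Hlrho).
    set (e := xi l - b1 * l - b3 * l ^ 3) in *.
    assert (Env : envok l [l; e] [1; Ct] [1%nat; 5%nat]).
    { apply envok_cons; [lra|simpl; lra|]. apply envok_cons; [auto|auto|apply envok_nil]. }
    pose proof (tool l _ _ _ 5 (LE (/kappa) f1 f2 f3 f4 b1 b3) Env Hl1 eq_refl) as HP.
    pose proof (I5 (/kappa) f1 f2 f3 f4 b1 b3 l e) as HI.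
    replace (b1 * l + b3 * l ^ 3 + e) with (xi l) in HI by (unfold e; ring).
    set (P := evalP [l; e] (LE (/kappa) f1 f2 f3 f4 b1 b3)) in *.
    fold CE in HP.
    pose proof (absb P). pose proof (absb (E24 (/ kappa) f1 f2 f3 f4 (xi l) l)).
    apply Rabs_le. split; lra. }
  destruct (coefzero _ _ (CH + CE) del Hdel ltac:(lra) Hc) as [Hc2 Hc4].
  exists Ct, rho. split; auto. intros l Hl.
  rewrite (final_alg kappa f1 f2 f3 f4 b1 b3 l Hk (f1_pos kappa Hk) Hb1 Hc2 Hc4).
  replace (xi l - (b1 * l + b3 * l ^ 3)) with (xi l - b1 * l - b3 * l ^ 3) by ring.
  apply Hxe; lra.
Qed.
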